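(* Let $\mathfrak g$ be a barrelled locally convex Lie algebra and let $(\pi,V)$ be a continuous unitary representation of $\mathfrak g$. Then the map $\mathfrak g\times V\to V$, $(\xi,\psi)\mapsto\pi(\xi)\psi$, is sequentially continuous when $V$ carries the weak topology, and also when $V$ carries the strong topology.
   Context: Barrelled: every closed, convex, circled, absorbing subset is a $0$-neighbourhood. A unitary representation $(\pi,V)$ of $\mathfrak g$: $V$ complex pre-Hilbert space (completion $\mathcal H_V$), $\pi\colon\mathfrak g\to\mathrm{End}(V)$ a Lie algebra homomorphism with skew-symmetric values. $\pi_n(\xi_n,\dots,\xi_1)=\pi(\xi_n)\cdots\pi(\xi_1)$, $\pi_0(\lambda)=\lambda\mathbf 1$ on $\mathfrak g^0=\mathbb R$. Continuous: for all $n\ge0$, $\psi\in V$, $\boldsymbol\xi\mapsto\pi_n(\boldsymbol\xi)\psi$ is continuous $\mathfrak g^n\to\mathcal H_V$ for the norm. Weak topology on $V$: seminorms $p_{\boldsymbol\xi}(\psi)=\|\pi_n(\boldsymbol\xi)\psi\|$, $\boldsymbol\xi\in\mathfrak g^n$, $n\ge0$. Strong topology: seminorms $p_B(\psi)=\sup_{\boldsymbol\xi\in B}\|\pi_n(\boldsymbol\xi)\psi\|$, $B\subseteq\mathfrak g^n$ bounded, $n\ge0$. *)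

(* Defs.v *)
From HB Require Import structures.
From mathcomp Require Import all_boot all_order all_algebra.
From mathcomp Require Import all_classical all_reals all_analysis.
From mathcomp Require Import complex.

Set Implicit Arguments.
Unset Strict Implicit.
Unset Printing Implicit Defensive.

Import Order.TTheory GRing.Theory Num.Theory.
Local Open Scope classical_set_scope.
Local Open Scope ring_scope.

Section Defs.
Variable R : realType.

Section Barrelled.
Variable E : tvsType R.

Definition circled (A : set E) : Prop :=
  forall (l : R) (a : E), `|l| <= 1 -> A a -> A (l *: a).

Definition absorbing (A : set E) : Prop :=
  forall x : E, exists2 r : R, 0 < r &
    forall l : R, r <= `|l| -> exists2 a, A a & x = l *: a.

Definition barrelled : Prop :=
  forall A : set E, closed A -> convex_set A -> circled A -> absorbing A ->
    nbhs (0 : E) A.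
End Barrelled.

Definition lc_lie_bracket (g : tvsType R) (br : g -> g -> g) : Prop :=
  [/\ forall (a : R) (x y z : g), br (a *: x + y) z = a *: br x z + br y z,
      forall (a : R) (x y z : g), br x (a *: y + z) = a *: br x y + br x z,
      forall x : g, br x x = 0,
      forall x y z : g, br x (br y z) + br y (br z x) + br z (br x y) = 0
    & continuous (fun p : g * g => br p.1 p.2)].

Definition inner_product (V : lmodType R[i]) (ip : V -> V -> R[i]) : Prop :=
  [/\ forall (a : R[i]) (u v w : V), ip (a *: u + v) w = a * ip u w + ip v w,
      forall u v : V, ip u v = ((ip v u)^*)%C,
      forall u : V, 0 <= ip u u
    & forall u : V, ip u u = 0 -> u = 0].

Definition ipnorm (V : lmodType R[i]) (ip : V -> V -> R[i]) (u : V) : R :=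
  Num.sqrt (complex.Re (ip u u)).

Section Rep.
Variables (g : tvsType R) (br : g -> g -> g).
Variables (V : lmodType R[i]) (ip : V -> V -> R[i]) (pi : g -> V -> V).

Definition unitary_rep : Prop :=
  [/\ forall (x : g) (a : R[i]) (u v : V), pi x (a *: u + v) = a *: pi x u + pi x v,
      forall (a : R) (x y : g) (u : V),
        pi (a *: x + y) u = (a%:C)%C *: pi x u + pi y u,
      forall (x y : g) (u : V), pi (br x y) u = pi x (pi y u) - pi y (pi x u)
    & forall (x : g) (u v : V), ip (pi x u) v = - ip u (pi x v)].

(* pi_n (xi_n, ..., xi_1) psi = pi(xi_n) ... pi(xi_1) psi, with
   xi : 'I_n -> g and xi_{k+1} = xi k; pi_0 = identity *)
Definition pin (n : nat) (xi : {ptws 'I_n -> g}) (psi : V) : V :=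
  foldr (fun i acc => pi (xi i) acc) psi (rev (enum 'I_n)).

(* continuity of xi |-> pi_n(xi) psi from g^n (product topology) to the
   norm topology of V (i.e. of its completion H_V, restricted to V) *)
Definition continuous_rep : Prop :=
  forall (n : nat) (psi : V) (xi0 : {ptws 'I_n -> g}) (eps : R), 0 < eps ->
    \forall xi \near xi0, ipnorm ip (pin xi psi - pin xi0 psi) < eps.

Definition bounded_prod (n : nat) (B : set {ptws 'I_n -> g}) : Prop :=
  forall W : set {ptws 'I_n -> g}, nbhs ((fun _ => (0 : g)) : {ptws 'I_n -> g}) W ->
    exists2 s : R, 0 < s & forall t : R, s < t ->
      forall xi, B xi -> exists2 w, W w & forall i, xi i = t *: w i.

Definition p_weak (p : {n : nat & {ptws 'I_n -> g}}) (psi : V) : R :=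
  ipnorm ip (pin (projT2 p) psi).

Definition p_strong (p : {n : nat & set {ptws 'I_n -> g}}) (psi : V) : \bar R :=
  ereal_sup [set (ipnorm ip (pin xi psi))%:E | xi in projT2 p].

Definition weak_nbhs (psi : V) : set_system V := fun U =>
  exists (k : nat) (F : 'I_k -> {n : nat & {ptws 'I_n -> g}}),
    exists2 eps : R, 0 < eps &
      [set phi | forall j, p_weak (F j) (phi - psi) < eps] `<=` U.

Definition strong_nbhs (psi : V) : set_system V := fun U =>
  exists (k : nat) (F : 'I_k -> {n : nat & set {ptws 'I_n -> g}}),
    (forall j, bounded_prod (projT2 (F j))) /\
    exists2 eps : R, 0 < eps &
      [set phi | forall j, (p_strong (F j) (phi - psi) < eps%:E)%E] `<=` U.

End Rep.

Definition seq_cvg_in (V : Type) (N : V -> set_system V) (u : nat -> V) (l : V) :=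
  forall U, N l U -> \forall k \near \oo, U (u k).

Definition seq_continuous_action (g : tvsType R) (V : Type)
    (pi : g -> V -> V) (N : V -> set_system V) : Prop :=
  forall (xis : nat -> g) (xi : g) (psis : nat -> V) (psi : V),
    xis @ \oo --> xi -> seq_cvg_in N psis psi ->
    seq_cvg_in N (fun k => pi (xis k) (psis k)) (pi xi psi).

End Defs.

(* Main.v *)
Set Warnings "-notation-overridden,-notation-incompatible-prefix".
Require Import Defs.
From HB Require Import structures.
From mathcomp Require Import all_boot all_order all_algebra.
From mathcomp Require Import all_classical all_reals all_analysis.
From mathcomp Require Import complex.
From mathcomp Require Import ring lra.
Set Implicit Arguments.
Unset Strict Implicit.
Unset Printing Implicit Defensive.
Import Order.TTheory GRing.Theory Num.Theory.
Local Open Scope classical_set_scope.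
Local Open Scope ring_scope.
Set Warnings "-notation-overridden,-notation-incompatible-prefix".
Require Import Defs.
From HB Require Import structures.
From mathcomp Require Import all_boot all_order all_algebra.
From mathcomp Require Import all_classical all_reals all_analysis.
From mathcomp Require Import complex.
From mathcomp Require Import ring lra.
Set Implicit Arguments.
Unset Strict Implicit.
Unset Printing Implicit Defensive.
Import Order.TTheory GRing.Theory Num.Theory.
Local Open Scope classical_set_scope.
Local Open Scope ring_scope.
Section IP.
Variables (R : realType) (V : lmodType R[i]) (ip : V -> V -> R[i]).
Hypothesis Hip : inner_product ip.

Definition qn (u : V) : R := complex.Re (ip u u).

Lemma ipDl u v w : ip (u + v) w = ip u w + ip v w.
Proof. by case: Hip => H _ _ _; rewrite -[u]scale1r H mul1r scale1r. Qed.
Lemma ip0l w : ip 0 w = 0.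
Proof. by apply/eqP; rewrite -(subrr (ip 0 w)) -{2}(addr0 0) ipDl addrK. Qed.
Lemma ipZl a u w : ip (a *: u) w = a * ip u w.
Proof. by case: Hip => H _ _ _; rewrite -[a *: u]addr0 H ip0l addr0. Qed.
Lemma ipC u v : ip u v = ((ip v u)^*)%C.
Proof. by case: Hip. Qed.
Lemma ipDr u v w : ip u (v + w) = ip u v + ip u w.
Proof. by rewrite ipC ipDl raddfD /= -!ipC. Qed.
Lemma ipZr a u v : ip u (a *: v) = (a^*)%C * ip u v.
Proof. by rewrite ipC ipZl rmorphM /= -ipC. Qed.
Lemma ipNl u w : ip (- u) w = - ip u w.
Proof. by rewrite -scaleN1r ipZl mulN1r. Qed.
Lemma ipNr u w : ip u (- w) = - ip u w.
Proof. rewrite -scaleN1r ipZr (_ : ((-1)^*)%C = -1) ?mulN1r //. by apply/eqP; rewrite eq_complex /= ?opprK ?oppr0 !eqxx. Qed.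

Lemma qn_ge0 u : 0 <= qn u.
Proof. case: Hip => _ _ H _; move: (H u); rewrite /qn lecE /=. by case/andP. Qed.

Lemma Re_conj (z : R[i]) : complex.Re (z^*)%C = complex.Re z.
Proof. by case: z. Qed.

Lemma qnD u v : qn (u + v) = qn u + qn v + 2 * complex.Re (ip u v).
Proof.
rewrite /qn ipDl !ipDr [ip v u]ipC !raddfD /= Re_conj.
by rewrite mulr2n mulrDl mul1r; ring.
Qed.

Lemma Re_realM (c : R) (z : R[i]) : complex.Re ((c%:C)%C * z) = c * complex.Re z.
Proof. by case: z => a b /=; ring. Qed.

Lemma ipZZ (a b : R) u v : ip ((a%:C)%C *: u) ((b%:C)%C *: v) = ((a * b)%:C)%C * ip u v.
Proof. by rewrite ipZl ipZr conjc_real mulrA rmorphM. Qed.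

Lemma Re_ipZZ (a b : R) u v :
  complex.Re (ip ((a%:C)%C *: u) ((b%:C)%C *: v)) = a * b * complex.Re (ip u v).
Proof. by rewrite ipZZ Re_realM. Qed.

Lemma qnZ (c : R) u : qn ((c%:C)%C *: u) = c ^+ 2 * qn u.
Proof. by rewrite /qn Re_ipZZ expr2. Qed.

Lemma qnN u : qn (- u) = qn u.
Proof. by rewrite /qn ipNl ipNr opprK. Qed.

Lemma Re_ipN u v : complex.Re (ip u (- v)) = - complex.Re (ip u v).
Proof. by rewrite ipNr raddfN. Qed.

Lemma Re_bound (t : R) u v : 0 < t ->
  2 * complex.Re (ip u v) <= t * qn u + t^-1 * qn v.
Proof.
move=> t0; have := qn_ge0 ((t%:C)%C *: u - v).
rewrite qnD qnN qnZ Re_ipN -[X in complex.Re (ip _ X)]scale1r.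
rewrite -[1 : R[i]]/((1%:C)%C) Re_ipZZ mulr1 => h.
rewrite -(ler_pM2l t0).
have -> : t * (t * qn u + t^-1 * qn v) = t ^+ 2 * qn u + qn v.
  by field; rewrite gt_eqF.
lra.
Qed.

Lemma qnD_le (t : R) u v : 0 < t -> qn (u + v) <= (1 + t) * qn u + (1 + t^-1) * qn v.
Proof. move=> t0; rewrite qnD; have := Re_bound u v t0; lra. Qed.

Lemma qnD2 u v : qn (u + v) <= 2 * qn u + 2 * qn v.
Proof. by have := qnD_le u v ltr01; rewrite invr1. Qed.

Lemma subr_ge0_pr (l : R) : l <= 1 -> 0 <= 1 - l.
Proof. by rewrite subr_ge0. Qed.

Lemma qn_convex (l : R) u v : 0 <= l <= 1 ->
  qn ((l%:C)%C *: u + ((1 - l)%:C)%C *: v) <= l * qn u + (1 - l) * qn v.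
Proof.
case/andP => l0 l1; rewrite qnD !qnZ Re_ipZZ.
have := Re_bound u v ltr01; rewrite invr1 !mul1r -subr_ge0 => h.
have := mulr_ge0 (mulr_ge0 l0 (subr_ge0_pr l1)) h.
nra.
Qed.

End IP.
Section Pin.
Variables (R : realType) (g : tvsType R) (V : lmodType R[i]) (pi : g -> V -> V).
Hypothesis Hv : forall (x : g) (a : R[i]) (u v : V), pi x (a *: u + v) = a *: pi x u + pi x v.
Hypothesis Hg : forall (a : R) (x y : g) (u : V), pi (a *: x + y) u = (a%:C)%C *: pi x u + pi y u.

Lemma dbl0 (M : zmodType) (a : M) : a = a + a -> a = 0.
Proof. by move=> h; rewrite -(subrr a) {2}h addrK. Qed.
Lemma pi0v x : pi x 0 = 0.
Proof. by apply: dbl0; rewrite -{1}(addr0 0) -{1}(scale1r 0) Hv scale1r. Qed.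
Lemma piDv x u v : pi x (u + v) = pi x u + pi x v.
Proof. by rewrite -{1}(scale1r u) Hv scale1r. Qed.
Lemma piZv x a u : pi x (a *: u) = a *: pi x u.
Proof. by rewrite -(addr0 (a *: u)) Hv pi0v addr0. Qed.
Lemma piNv x u : pi x (- u) = - pi x u.
Proof. by rewrite -scaleN1r piZv scaleN1r. Qed.
Lemma piBv x u v : pi x (u - v) = pi x u - pi x v.
Proof. by rewrite piDv piNv. Qed.
Lemma pi0g u : pi 0 u = 0.
Proof. by apply: dbl0; rewrite -{1}(addr0 0) -{1}(scale1r 0) Hg scale1r. Qed.
Lemma piDg x y u : pi (x + y) u = pi x u + pi y u.
Proof. by rewrite -{1}(scale1r x) Hg scale1r. Qed.
Lemma piZg a x u : pi (a *: x) u = (a%:C)%C *: pi x u.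
Proof. by rewrite -(addr0 (a *: x)) Hg pi0g addr0. Qed.
Lemma piNg x u : pi (- x) u = - pi x u.
Proof. by rewrite -(scaleN1r x) piZg rmorphN1 scaleN1r. Qed.
Lemma piBg x y u : pi (x - y) u = pi x u - pi y u.
Proof. by rewrite piDg piNg. Qed.

Definition ext n (z : g) (eta : 'I_n -> g) : {ptws 'I_n.+1 -> g} :=
  fun i => match unlift ord0 i with Some j => eta j | None => z end.

Lemma fold_lin n (xi : 'I_n -> g) (s : seq 'I_n) a u v :
  foldr (fun i acc => pi (xi i) acc) (a *: u + v) s =
  a *: foldr (fun i acc => pi (xi i) acc) u s + foldr (fun i acc => pi (xi i) acc) v s.
Proof. by elim: s => [|i s IH] //=; rewrite IH Hv. Qed.

Lemma pinZD n (xi : {ptws 'I_n -> g}) a u v : pin pi xi (a *: u + v) = a *: pin pi xi u + pin pi xi v.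
Proof. exact: fold_lin. Qed.
Lemma pin0 n (xi : {ptws 'I_n -> g}) : pin pi xi 0 = 0.
Proof. by apply: dbl0; rewrite -{1}(addr0 0) -{1}(scale1r 0) pinZD scale1r. Qed.
Lemma pinD n (xi : {ptws 'I_n -> g}) u v : pin pi xi (u + v) = pin pi xi u + pin pi xi v.
Proof. by rewrite -{1}(scale1r u) pinZD scale1r. Qed.
Lemma pinZ n (xi : {ptws 'I_n -> g}) a u : pin pi xi (a *: u) = a *: pin pi xi u.
Proof. by rewrite -(addr0 (a *: u)) pinZD pin0 addr0. Qed.
Lemma pinN n (xi : {ptws 'I_n -> g}) u : pin pi xi (- u) = - pin pi xi u.
Proof. by rewrite -scaleN1r pinZ scaleN1r. Qed.
Lemma pinB n (xi : {ptws 'I_n -> g}) u v : pin pi xi (u - v) = pin pi xi u - pin pi xi v.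
Proof. by rewrite pinD pinN. Qed.

Lemma pin_ext n z (eta : {ptws 'I_n -> g}) psi : pin pi (ext z eta) psi = pin pi eta (pi z psi).
Proof.
rewrite /pin enum_ordSl rev_cons foldr_rcons /= /ext unlift_none -map_rev foldr_map.
by elim: (rev _) => //= i s ->; rewrite liftK.
Qed.

Lemma fold_scale n (w : 'I_n -> g) (t : R) (s : seq 'I_n) psi :
  foldr (fun i acc => pi (t *: w i) acc) psi s =
  ((t ^+ size s)%:C)%C *: foldr (fun i acc => pi (w i) acc) psi s.
Proof.
elim: s => [|i s IH] /=; first by rewrite expr0 scale1r.
by rewrite IH piZg piZv scalerA -rmorphM exprS.
Qed.

Lemma pin_scale n (w : {ptws 'I_n -> g}) (t : R) psi :
  pin pi ((fun i => t *: w i) : {ptws 'I_n -> g}) psi = ((t ^+ n)%:C)%C *: pin pi w psi.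
Proof. by rewrite /pin fold_scale size_rev size_enum_ord. Qed.

End Pin.
Section Topo.
Variables (R : realType) (g : tvsType R).

Definition zt n : {ptws 'I_n -> g} := fun _ => 0.
Arguments zt : clear implicits.

Lemma box_nbhs n (W0 : set g) : nbhs (0:g) W0 ->
  nbhs (zt n) [set w : {ptws 'I_n -> g} | forall i, W0 (w i)].
Proof.
move=> HW.
have H := proj1 (@pointwise_cvgP (discrete_topology 'I_n) g (nbhs (zt n)) (zt n) (nbhs_filter _)) cvg_id.
exact: (@filter_forall _ 'I_n (fun i (w : {ptws 'I_n -> g}) => W0 (w i)) (nbhs (zt n)) _ (fun i => H i W0 HW)).
Qed.

Lemma nbhs_box n (W : set {ptws 'I_n -> g}) : nbhs (zt n) W ->
  exists2 W0 : set g, nbhs (0:g) W0 & forall w, (forall i, W0 (w i)) -> W w.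
Proof.
move=> HW.
pose F := filter_from (nbhs (0:g)) (fun W0 => [set w : {ptws 'I_n -> g} | forall i, W0 (w i)]).
have FF : Filter F.
  apply: filter_from_filter; first by exists setT; exact: filterT.
  move=> A B HA HB; exists (A `&` B); first exact: filterI.
  by move=> w Hw; split => i; case: (Hw i).
have H2 := proj2 (@pointwise_cvgP (discrete_topology 'I_n) g F (zt n) FF).
have HF : F --> zt n.
  apply: H2 => i A HA; exists A; first exact: HA.
  by move=> w; apply.
have [W0 HW0 HS] := HF W HW.
by exists W0 => // w Hw; exact: HS.
Qed.

Lemma ext_cont n (eta : 'I_n -> g) : continuous (fun d : g => ext d eta : {ptws 'I_n.+1 -> g}).
Proof.
move=> d.
have H2 := proj2 (@pointwise_cvgP (discrete_topology 'I_n.+1) g ((fun d => ext d eta) @ nbhs d) (ext d eta) (fmap_filter _ (nbhs_filter d))).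
apply: H2 => t A HA.
change (nbhs d [set x | A (ext x eta t)]).
move: HA; rewrite /ext; case: (unlift ord0 t) => [j|] HA //.
by apply: nearW => x; exact: nbhs_singleton HA.
Qed.

Lemma ext_seq n (eta : 'I_n -> g) (u : nat -> g) d :
  u @ \oo --> d -> (fun m => ext (u m) eta : {ptws 'I_n.+1 -> g}) @ \oo --> ext d eta.
Proof. by move=> Hu; have := continuous_cvg eventually_filter (@ext_cont n eta d) Hu. Qed.

Lemma cvg0_sub (u : nat -> g) l : u @ \oo --> l -> (fun m => u m - l) @ \oo --> 0.
Proof.
move=> H A HA; have [N _ HN] := H _ (nbhsT l HA).
exists N => // m /HN [a Ha Heq]; rewrite /= -Heq. by rewrite [l + a]addrC addrK.
Qed.

Lemma eventually_scaled (u : nat -> g) (c : R) (A : set g) : c != 0 ->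
  u @ \oo --> 0 -> nbhs 0 A -> \forall m \near \oo, A (c^-1 *: u m).
Proof.
move=> c0 Hu HA; have [N _ HN] := Hu _ (nbhs0Z c0 HA).
by exists N => // m /HN [a Ha <-]; rewrite scalerA mulVf // scale1r.
Qed.

Lemma near_pinfty_pos (P : R -> Prop) :
  (\forall t \near +oo, P t) -> exists2 s, 0 < s & forall t, s < t -> P t.
Proof.
move=> [M [Mr HM]]; exists (Num.max 1 M); first by rewrite lt_max ltr01.
by move=> t; rewrite gt_max => /andP [_ /HM].
Qed.

Lemma inv_pinfty (A : set R^o) : nbhs (0 : R^o) A -> \forall t \near +oo, A t^-1.
Proof.
move/nbhs_norm0P => [e e0 He].
exists e^-1; split; first exact: num_real.
move=> t et; apply: He => /=.
have t0 : 0 < t by apply: lt_trans et; rewrite invr_gt0.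
rewrite ger0_norm ?invr_ge0 ?ltW //.
by rewrite -(invrK e) ltf_pV2 // ?posrE // invr_gt0.
Qed.

Lemma scale_nbhs (x : g) (W0 : set g) : nbhs 0 W0 ->
  exists2 A : set R^o, nbhs (0:R^o) A &
  exists2 B : set g, nbhs x B & forall c y, A c -> B y -> W0 (c *: y).
Proof.
move=> HW; have := @scale_continuous R g (0, x) W0.
rewrite /= scale0r => /(_ HW) [[A B]] /= [HA HB] HAB.
exists A => //; exists B => // c y Ac By; by apply: (HAB (c, y)); split.
Qed.

Lemma seq_bnd (u : nat -> g) (l : g) (W0 : set g) : u @ \oo --> l -> nbhs (0:g) W0 ->
  \forall t \near +oo, forall m, W0 (t^-1 *: u m).
Proof.
move=> Hu HW.
have [A HA [B HB HAB]] := scale_nbhs l HW.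
have [N _ HN] := Hu _ HB.
have Hfin : \forall t \near +oo, forall i : 'I_N, W0 (t^-1 *: u i).
  apply: (@filter_forall _ 'I_N (fun i t => W0 (t^-1 *: u i)) (pinfty_nbhs R) _) => i.
  have [A' HA' [B' HB' HAB']] := scale_nbhs (u i) HW.
  apply: (@filterS _ (pinfty_nbhs R) _ _ _ _ (inv_pinfty HA')) => t Ht.
  by apply: HAB' => //; exact: nbhs_singleton.
apply: (@filterS2 _ (pinfty_nbhs R) _ _ _ _ _ Hfin (inv_pinfty HA)) => t H1 H2 m.
case: (ltnP m N) => [lt|ge]; first exact: (H1 (Ordinal lt)).
by apply: HAB => //; apply: HN.
Qed.

End Topo.
Section Main.
Variables (R : realType) (g : tvsType R) (br : g -> g -> g).
Variables (V : lmodType R[i]) (ip : V -> V -> R[i]) (pi : g -> V -> V).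
Hypothesis Hb : barrelled g.
Hypothesis Hip : inner_product ip.
Hypothesis Hrep : unitary_rep br ip pi.
Hypothesis Hc : continuous_rep ip pi.

Let Hv : forall (x : g) (a : R[i]) (u v : V), pi x (a *: u + v) = a *: pi x u + pi x v.
Proof. by case: Hrep. Qed.
Let Hg : forall (a : R) (x y : g) (u : V), pi (a *: x + y) u = (a%:C)%C *: pi x u + pi y u.
Proof. by case: Hrep. Qed.

Lemma ipnorm_lt u eps : 0 < eps -> (ipnorm ip u < eps) = (qn ip u < eps ^+ 2).
Proof.
move=> e0; rewrite /ipnorm -[X in _ < X](@gtr0_norm _ eps) // -sqrtr_sqr.
by rewrite ltr_sqrt // exprn_gt0.
Qed.

Lemma Hcq n psi (xi0 : {ptws 'I_n -> g}) e : 0 < e ->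
  \forall xi \near xi0, qn ip (pin pi xi psi - pin pi xi0 psi) < e.
Proof.
move=> e0; have s0 : 0 < Num.sqrt e by rewrite sqrtr_gt0.
have := Hc psi xi0 s0.
by apply: filterS => xi; rewrite ipnorm_lt // sqr_sqrtr // ltW.
Qed.

Lemma ev2 (P Q S : nat -> Prop) : (\forall m \near \oo, P m) -> (\forall m \near \oo, Q m) ->
  (forall m, P m -> Q m -> S m) -> \forall m \near \oo, S m.
Proof.
move=> [N1 _ H1] [N2 _ H2] H; exists (maxn N1 N2) => // m /=.
by rewrite geq_max => /andP [a b]; apply: H; [apply: H1 | apply: H2].
Qed.

Lemma ev3 (P Q P' S : nat -> Prop) : (\forall m \near \oo, P m) -> (\forall m \near \oo, Q m) ->
  (\forall m \near \oo, P' m) ->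
  (forall m, P m -> Q m -> P' m -> S m) -> \forall m \near \oo, S m.
Proof.
move=> [N1 _ H1] [N2 _ H2] [N3 _ H3] H; exists (maxn N1 (maxn N2 N3)) => // m /=.
by rewrite !geq_max => /andP [a /andP [b c]]; apply: H; [apply: H1 | apply: H2 | apply: H3].
Qed.

Lemma weak_ev (psis : nat -> V) psi : seq_cvg_in (weak_nbhs ip pi) psis psi ->
  forall n (eta : {ptws 'I_n -> g}) e, 0 < e ->
  \forall m \near \oo, qn ip (pin pi eta (psis m - psi)) < e.
Proof.
move=> H n eta e e0; apply: (H [set phi | qn ip (pin pi eta (phi - psi)) < e]).
have s0 : 0 < Num.sqrt e by rewrite sqrtr_gt0.
exists 1%N, (fun _ => existT _ n eta), (Num.sqrt e) => // phi /(_ ord0).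
by rewrite /p_weak /= ipnorm_lt // sqr_sqrtr // ltW.
Qed.

Lemma strong_ev (psis : nat -> V) psi : seq_cvg_in (strong_nbhs ip pi) psis psi ->
  forall n (B : set {ptws 'I_n -> g}), bounded_prod B -> forall e, 0 < e ->
  \forall m \near \oo, forall xi, B xi -> qn ip (pin pi xi (psis m - psi)) < e.
Proof.
move=> H n B HB e e0; apply: (H [set phi | forall xi, B xi -> qn ip (pin pi xi (phi - psi)) < e]).
have s0 : 0 < Num.sqrt e by rewrite sqrtr_gt0.
exists 1%N, (fun _ => existT _ n B); split => //.
exists (Num.sqrt e) => // phi /(_ ord0) Hp xi Bxi.
rewrite -(sqr_sqrtr (ltW e0)) -ipnorm_lt // -lte_fin.
apply: le_lt_trans Hp; apply: ereal_sup_ubound; by exists xi.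
Qed.

Lemma decomp3 (z zm : g) (p pm : V) :
  pi zm pm - pi z p = pi z (pm - p) + pi (zm - z) (pm - p) + pi (zm - z) p.
Proof.
have -> : pi zm pm = pi (zm - z) pm + pi z pm by rewrite -piDg // subrK.
rewrite !piBv //.
set a := pi (zm - z) pm; set b := pi z pm; set c := pi z p; set d := pi (zm - z) p.
by rewrite -[RHS]addrA subrK [RHS]addrC addrA.
Qed.

Lemma decomp2 (z zm : g) (p pm : V) :
  pi zm pm - pi z p = pi zm (pm - p) + pi (zm - z) p.
Proof.
rewrite piBv // piBg //.
by rewrite addrA subrK.
Qed.

Lemma term_c n (eta : {ptws 'I_n -> g}) psi (d : nat -> g) e :
  d @ \oo --> 0 -> 0 < e -> \forall m \near \oo, qn ip (pin pi eta (pi (d m) psi)) < e.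
Proof.
move=> Hd e0.
have [N _ HN] := ext_seq Hd (Hcq psi (ext 0 eta) e0).
exists N => // m /HN /=.
by rewrite !pin_ext pi0g // pin0 // subr0.
Qed.

Lemma term_unif n (B : set {ptws 'I_n -> g}) psi (d : nat -> g) e :
  bounded_prod B -> d @ \oo --> 0 -> 0 < e ->
  \forall m \near \oo, forall eta, B eta -> qn ip (pin pi eta (pi (d m) psi)) < e.
Proof.
move=> HB Hd e0.
have H0 := Hcq psi (@zt R g n.+1) e0.
have [W0 HW0 HS] := nbhs_box H0.
have zt0 : pin pi (@zt R g n.+1) psi = 0.
  have -> : @zt R g n.+1 = ext 0 (@zt R g n).
    by apply/funext => i; rewrite /zt /ext; case: unlift.
  by rewrite pin_ext pi0g // pin0.
have [s s0 Hs] := HB _ (box_nbhs n HW0).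
pose t := s + 1.
have st : s < t by rewrite /t ltrDl.
have t0 : 0 < t by apply: lt_trans st.
have tn0 : (t ^+ n)^-1 != 0 by rewrite invr_eq0 expf_neq0 // gt_eqF.
have [N _ HN] := eventually_scaled tn0 Hd HW0.
exists N => // m /HN; rewrite invrK => Hm eta Beta.
have [w Hw Heta] := Hs t st eta Beta.
have -> : eta = (fun i => t *: w i) :> {ptws 'I_n -> g} by apply/funext.
rewrite pin_scale // -pinZ // -piZg // -pin_ext.
have := HS (ext (t ^+ n *: d m) w); rewrite zt0 subr0; apply.
by move=> i; rewrite /ext; case: unlift => [j|] //; exact: Hw.
Qed.

Lemma bnd_ext n (B : set {ptws 'I_n -> g}) (u : nat -> g) (l : g) :
  bounded_prod B -> u @ \oo --> l ->
  bounded_prod [set xi : {ptws 'I_n.+1 -> g} | exists m, exists2 eta, B eta & xi = ext (u m) eta].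
Proof.
move=> HB Hu W HW.
have [W0 HW0 HS] := nbhs_box HW.
have [s1 s10 Hs1] := HB _ (box_nbhs n HW0).
have [s2 s20 Hs2] := near_pinfty_pos (seq_bnd Hu HW0).
exists (Num.max s1 s2); first by rewrite lt_max s10.
move=> t; rewrite gt_max => /andP [t1 t2] xi [m [eta Beta ->]].
have t0 : 0 < t := lt_trans s10 t1.
have [w Hw Heta] := Hs1 t t1 eta Beta.
exists (ext (t^-1 *: u m) w).
  by apply: HS => i; rewrite /ext; case: unlift => [j|]; [exact: Hw | exact: Hs2].
move=> i; rewrite /ext; case: unlift => [j|] //.
by rewrite scalerA mulfV ?gt_eqF // scale1r.
Qed.

Lemma barrel_term n (eta : {ptws 'I_n -> g}) (phi : nat -> V) (d : nat -> g) e :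
  (forall (x : g) e', 0 < e' -> \forall m \near \oo, qn ip (pin pi eta (pi x (phi m))) < e') ->
  d @ \oo --> 0 -> 0 < e ->
  \forall m \near \oo, qn ip (pin pi eta (pi (d m) (phi m))) < e.
Proof.
move=> Hphi Hd e0.
pose T m x := pin pi eta (pi x (phi m)).
have TZ m c x : T m (c *: x) = (c%:C)%C *: T m x by rewrite /T piZg // pinZ.
have TD m x y : T m (x + y) = T m x + T m y by rewrite /T piDg // pinD.
have Tc m x0 e' : 0 < e' -> \forall x \near x0, qn ip (T m x - T m x0) < e'.
  move=> e'0; have H1 := Hcq (phi m) (ext x0 eta) e'0.
  have H2 := @ext_cont R g n eta x0 _ H1.
  apply: (@filterS _ (nbhs x0) _ _ _ _ H2) => x /=.
  by rewrite /T !pin_ext.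
pose A := [set x : g | forall m, qn ip (T m x) <= 1].
have Acl : closed A.
  move=> x Hx m; apply/ler_addgt0Pr => ee ee0.
  pose t := Num.min 1 (ee / 3).
  have t0 : 0 < t by rewrite lt_min ltr01 divr_gt0.
  have t1 : t <= 1 by rewrite ge_min lexx.
  have t3 : t <= ee / 3 by rewrite ge_min lexx orbT.
  have [x' [Ax' Nx']] := Hx _ (Tc m x (t ^+ 2) (exprn_gt0 _ t0)).
  have := qnD_le Hip (T m x') (T m x - T m x') t0.
  have -> : T m x' + (T m x - T m x') = T m x by rewrite addrC subrK.
  have -> : T m x - T m x' = - (T m x' - T m x) by rewrite opprB.
  rewrite qnN //.
  have h1 : (1 + t^-1) * qn ip (T m x' - T m x) <= (1 + t^-1) * t ^+ 2.
    by apply: ler_wpM2l; [rewrite addr_ge0 // invr_ge0 ltW | exact: ltW].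
  have h2 : (1 + t^-1) * t ^+ 2 = t ^+ 2 + t by field; rewrite gt_eqF.
  have h3 : (1 + t) * qn ip (T m x') <= 1 + t.
    by rewrite -[X in _ <= X]mulr1; apply: ler_wpM2l; [rewrite addr_ge0 // ltW | exact: Ax'].
  have h4 : t ^+ 2 <= t by rewrite expr2 ler_piMl // ltW.
  lra.
have Acv : convex_set A.
  move=> x y l; rewrite !inE => Ax Ay m.
  change (qn ip (T m (l%:num *: x + (1 - l%:num) *: y)) <= 1).
  rewrite TD !TZ.
  have l0 : 0 <= l%:num by [].
  have l1 : l%:num <= 1 by [].
  apply: le_trans (qn_convex Hip _ _ _) _; first by rewrite l0 l1.
  have := Ax m; have := Ay m; nra.
have Aci : circled A.
  move=> l x hl Ax m; rewrite TZ qnZ //.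
  have hl2 : l ^+ 2 <= 1 by rewrite -real_normK ?num_real // exprn_ile1.
  have := Ax m; have := qn_ge0 Hip (T m x); nra.
have Aab : absorbing A.
  move=> x; have [N _ HN] := Hphi x 1 ltr01.
  pose M := 1 + \sum_(k < N) qn ip (T k x).
  have S0 : 0 <= \sum_(k < N) qn ip (T k x) by apply: sumr_ge0 => k _; exact: qn_ge0.
  have HM k : qn ip (T k x) <= M.
    case: (ltnP k N) => [lt|ge].
      rewrite /M (bigD1 (Ordinal lt)) //=.
      have : 0 <= \sum_(i < N | i != Ordinal lt) qn ip (T i x).
        by apply: sumr_ge0 => i _; exact: qn_ge0.
      lra.
    have := HN k ge; rewrite /M /=; lra.
  exists (M + 1); first by rewrite /M; lra.
  move=> l hl.
  have la : 0 < `|l| by apply: lt_le_trans hl; rewrite /M; lra.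
  have l0 : l != 0 by rewrite -normr_gt0.
  exists (l^-1 *: x); last by rewrite scalerA divff // scale1r.
  move=> m; rewrite TZ qnZ //.
  have lp : 0 < l ^+ 2 by rewrite -real_normK ?num_real // exprn_gt0.
  have hq : qn ip (T m x) <= l ^+ 2.
    rewrite -real_normK ?num_real //.
    have := HM m; have := qn_ge0 Hip (T m x); nra.
  have li : 0 <= (l ^+ 2)^-1 by rewrite invr_ge0 ltW.
  rewrite exprVn; apply: le_trans (ler_wpM2l li hq) _.
  by rewrite mulVf // gt_eqF.
have HA := Hb Acl Acv Aci Aab.
pose c := Num.sqrt (e / 2).
have e20 : 0 < e / 2 by rewrite divr_gt0.
have c0 : 0 < c by rewrite sqrtr_gt0.
have cn0 : c != 0 by rewrite gt_eqF.
have [N _ HN] := eventually_scaled cn0 Hd HA.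
exists N => // m /HN Hm.
change (qn ip (T m (d m)) < e).
have -> : d m = c *: (c^-1 *: d m) by rewrite scalerA divff // scale1r.
rewrite TZ qnZ // sqr_sqrtr ?ltW //.
have := Hm m; have := qn_ge0 Hip (T m (c^-1 *: d m)); nra.
Qed.

Lemma qn3 (a b c : V) : qn ip (a + b + c) <= 4 * qn ip a + 4 * qn ip b + 2 * qn ip c.
Proof.
have h1 := qnD2 Hip (a + b) c; have h2 := qnD2 Hip a b; lra.
Qed.

Lemma weak_main : seq_continuous_action pi (weak_nbhs ip pi).
Proof.
move=> xis xi psis psi Hx Hp U [k [F [eps eps0 HU]]].
suff H : \forall m \near \oo, forall j, p_weak ip pi (F j) (pi (xis m) (psis m) - pi xi psi) < eps.
  by move: H => [N _ HN]; exists N => // m /HN /HU.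
apply: (@filter_forall _ 'I_k (fun j m => p_weak ip pi (F j) (pi (xis m) (psis m) - pi xi psi) < eps) \oo _) => j.
case: (F j) => n eta; rewrite /p_weak /=.
have Hd := cvg0_sub Hx.
pose e' := eps ^+ 2 / 12.
have e'0 : 0 < e' by rewrite divr_gt0 // exprn_gt0.
have Ha := weak_ev Hp (ext xi eta) e'0.
have Hphi : forall (x : g) e1, 0 < e1 ->
    \forall m \near \oo, qn ip (pin pi eta (pi x (psis m - psi))) < e1.
  move=> x e1 e10; have [N _ HN] := weak_ev Hp (ext x eta) e10.
  by exists N => // m /HN /=; rewrite pin_ext.
have Hbt := barrel_term Hphi Hd e'0.
have Hcc := term_c eta psi Hd e'0.
apply: (ev3 Ha Hbt Hcc) => m h1 h2 h3.
rewrite ipnorm_lt // decomp3 !pinD //.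
rewrite pin_ext in h1.
have := qn3 (pin pi eta (pi xi (psis m - psi))) (pin pi eta (pi (xis m - xi) (psis m - psi)))
  (pin pi eta (pi (xis m - xi) psi)).
have := exprn_gt0 2 eps0.
rewrite /e' in h1 h2 h3; lra.
Qed.

Lemma strong_main : seq_continuous_action pi (strong_nbhs ip pi).
Proof.
move=> xis xi psis psi Hx Hp U [k [F [HF [eps eps0 HU]]]].
suff H : \forall m \near \oo, forall j,
    (p_strong ip pi (F j) (pi (xis m) (psis m) - pi xi psi) < eps%:E)%E.
  by move: H => [N _ HN]; exists N => // m /HN /HU.
apply: (@filter_forall _ 'I_k (fun j m => (p_strong ip pi (F j) (pi (xis m) (psis m) - pi xi psi) < eps%:E)%E) \oo _) => j.
move: (HF j); case: (F j) => n B HB; rewrite /p_strong /=.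
have Hd := cvg0_sub Hx.
pose e' := (eps / 2) ^+ 2 / 4.
have e'0 : 0 < e' by rewrite divr_gt0 // exprn_gt0 // divr_gt0.
have H1 := strong_ev Hp (bnd_ext HB Hx) e'0.
have H2 := term_unif psi HB Hd e'0.
apply: (ev2 H1 H2) => m h1 h2.
have eps2 : 0 < eps / 2 by rewrite divr_gt0.
apply: (@le_lt_trans _ _ (eps / 2)%:E); last by rewrite lte_fin; lra.
apply: ge_ereal_sup => y [eta Beta <-]; rewrite lee_fin; apply: ltW.
rewrite ipnorm_lt // decomp2 pinD //.
have := h1 (ext (xis m) eta); rewrite pin_ext => /(_ (ex_intro _ m (ex_intro2 _ _ eta Beta erefl))) h1'.
have := h2 eta Beta => h2'.
have := qnD2 Hip (pin pi eta (pi (xis m) (psis m - psi))) (pin pi eta (pi (xis m - xi) psi)).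
have := exprn_gt0 2 eps2.
rewrite /e' in h1' h2'; lra.
Qed.

End Main.

Theorem lemma3p14 (R : realType) (g : tvsType R) (br : g -> g -> g)
    (V : lmodType R[i]) (ip : V -> V -> R[i]) (pi : g -> V -> V) :
  barrelled g -> lc_lie_bracket br -> inner_product ip ->
  unitary_rep br ip pi -> continuous_rep ip pi ->
  seq_continuous_action pi (weak_nbhs ip pi) /\
  seq_continuous_action pi (strong_nbhs ip pi).
Proof.
move=> Hb _ Hip Hrep Hc; split.
- exact: (weak_main Hb Hip Hrep Hc).
- exact: (strong_main Hip Hrep Hc).
Qed.
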